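(* Let $\mathfrak{R}$ be an alternative ring containing a nontrivial idempotent $e_1$, with Peirce decomposition $\mathfrak{R}=\mathfrak{R}_{11}\oplus\mathfrak{R}_{12}\oplus\mathfrak{R}_{21}\oplus\mathfrak{R}_{22}$, which satisfies: (i) if $a_{11}\in\mathfrak{R}_{11}$, $a_{22}\in\mathfrak{R}_{22}$ and $[a_{11}+a_{22},\mathfrak{R}_{12}]=0$, then $a_{11}+a_{22}\in\mathcal{Z}(\mathfrak{R})$; (ii) if $a_{11}\in\mathfrak{R}_{11}$, $a_{22}\in\mathfrak{R}_{22}$ and $[a_{11}+a_{22},\mathfrak{R}_{21}]=0$, then $a_{11}+a_{22}\in\mathcal{Z}(\mathfrak{R})$. Then every multiplicative Lie $3$-derivation $\mathcal{D}$ of $\mathfrak{R}$ is almost additive, i.e. $\mathcal{D}(a+b)-\mathcal{D}(a)-\mathcal{D}(b)\in\mathcal{Z}(\mathfrak{R})$ for all $a,b\in\mathfrak{R}$.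
   Context: Rings are not assumed associative or unital. $\mathfrak{R}$ is alternative if $(x,x,y)=0=(y,x,x)$ for all $x,y$, where $(x,y,z)=(xy)z-x(yz)$. $[x,y]=xy-yx$; $\mathcal{Z}(\mathfrak{R})=\{r: [r,x]=0\ \forall x\in\mathfrak{R}\}$. A map $\mathcal{D}\colon\mathfrak{R}\to\mathfrak{R}$, not necessarily additive, is a multiplicative Lie $3$-derivation if $\mathcal{D}([[x,y],w])=[[\mathcal{D}(x),y],w]+[[x,\mathcal{D}(y)],w]+[[x,y],\mathcal{D}(w)]$ for all $x,y,w\in\mathfrak{R}$. A nontrivial idempotent is $e_1\ne0$ with $e_1^2=e_1$ which is not a multiplicative identity. With $e_2a:=a-e_1a$, $ae_2:=a-ae_1$, set $\mathfrak{R}_{ij}=e_i\mathfrak{R}e_j$ ($i,j=1,2$), so $\mathfrak{R}=\bigoplus_{i,j}\mathfrak{R}_{ij}$. *)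

(* Defs.v *)
(* Non-associative rings are not in MathComp (whose rings are
   associative and unital), so we model a ring as an abelian group
   (zmodType) with a biadditive multiplication [mul]. *)
From mathcomp Require Import all_boot all_order all_algebra.
Set Implicit Arguments. Unset Strict Implicit. Unset Printing Implicit Defensive.
Import GRing.Theory.
Local Open Scope ring_scope.

Section NonAssoc.
Variables (R : zmodType) (mul : R -> R -> R).

Definition nonassoc_ring : Prop :=
  (forall x y z, mul (x + y) z = mul x z + mul y z) /\
  (forall x y z, mul x (y + z) = mul x y + mul x z).

Definition assoc (x y z : R) : R := mul (mul x y) z - mul x (mul y z).

Definition alternative : Prop :=
  forall x y, assoc x x y = 0 /\ assoc y x x = 0.

Definition commr (x y : R) : R := mul x y - mul y x.

Definition central (r : R) : Prop := forall x, commr r x = 0.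

Definition nontrivial_idempotent (e : R) : Prop :=
  e <> 0 /\ mul e e = e /\ ~ (forall x, mul e x = x /\ mul x e = x).

(* e_i a and a e_j, with e_2 a := a - e_1 a, a e_2 := a - a e_1 *)
Definition lmul_e (e : R) (i : bool) (a : R) : R :=
  if i then mul e a else a - mul e a.
Definition rmul_e (e : R) (j : bool) (a : R) : R :=
  if j then mul a e else a - mul a e.

(* Peirce component R_ij = e_i R e_j  (index true = 1, false = 2) *)
Definition peirce (e : R) (i j : bool) (x : R) : Prop :=
  exists a, x = rmul_e e j (lmul_e e i a).

Definition lie3_derivation (D : R -> R) : Prop :=
  forall x y w,
    D (commr (commr x y) w) =
      commr (commr (D x) y) w + commr (commr x (D y)) w
      + commr (commr x y) (D w).

End NonAssoc.

(* Main.v *)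
Require Import Defs.
From mathcomp Require Import all_boot all_order all_algebra.
Import GRing.Theory.
Local Open Scope ring_scope.

Section ZN.
Variable R : zmodType.
Inductive zx := ZA of nat | Z0 | ZP of zx & zx | ZN of zx | ZI of zx & int.

Fixpoint zeval (env : seq R) (t : zx) : R :=
  match t with
  | ZA n => nth 0 env n
  | Z0 => 0
  | ZP a b => zeval env a + zeval env b
  | ZN a => - zeval env a
  | ZI a k => zeval env a *~ k
  end.

Fixpoint cadd (c d : seq int) : seq int :=
  match c, d with
  | [::], _ => d
  | _, [::] => c
  | a :: c', b :: d' => (a + b) :: cadd c' d'
  end.

Fixpoint coef (t : zx) : seq int :=
  match t with
  | ZA n => rcons (nseq n 0) 1
  | Z0 => [::]
  | ZP a b => cadd (coef a) (coef b)
  | ZN a => map (fun x => - x) (coef a)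
  | ZI a k => map (fun x => x * k) (coef a)
  end.

Fixpoint ceval (env : seq R) (c : seq int) : R :=
  match c with
  | [::] => 0
  | a :: c' => (head 0 env) *~ a + ceval (behead env) c'
  end.

Lemma ceval_add env c d : ceval env (cadd c d) = ceval env c + ceval env d.
Proof.
elim: c d env => [|a c IH] [|b d] env /=; rewrite ?add0r ?addr0 //.
by rewrite IH mulrzDr addrACA.
Qed.

Lemma ceval_opp env c : ceval env (map (fun x => - x) c) = - ceval env c.
Proof.
elim: c env => [|a c IH] env /=; first by rewrite oppr0.
by rewrite IH mulrNz opprD.
Qed.

Lemma ceval_mul env c k : ceval env (map (fun x => x * k) c) = ceval env c *~ k.
Proof.
elim: c env => [|a c IH] env /=; first by rewrite mul0rz.
by rewrite IH mulrzDl mulrzA.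
Qed.

Lemma ceval_atom env n : ceval env (rcons (nseq n 0) 1) = nth 0 env n.
Proof.
elim: n env => [|n IH] env /=; first by case: env => [|x env] /=; rewrite addr0.
by rewrite IH mulr0z add0r; case: env => [|x env] //=; rewrite nth_nil.
Qed.

Lemma zeval_coef env t : zeval env t = ceval env (coef t).
Proof.
elim: t => [n||a IHa b IHb|a IHa|a IHa k] /=.
- by rewrite ceval_atom.
- by [].
- by rewrite ceval_add IHa IHb.
- by rewrite ceval_opp IHa.
- by rewrite ceval_mul IHa.
Qed.

Lemma ceval_zero env c : all (fun x => x == 0) c -> ceval env c = 0.
Proof.
elim: c env => [|a c IH] env //= /andP [/eqP -> H].
by rewrite IH // mulr0z addr0.
Qed.

Lemma zcheck env t1 t2 :
  all (fun x => x == 0) (cadd (coef t1) (map (fun x => - x) (coef t2))) ->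
  zeval env t1 = zeval env t2.
Proof.
move=> H; apply/eqP; rewrite -subr_eq0 !zeval_coef.
by rewrite -ceval_opp -ceval_add ceval_zero.
Qed.
End ZN.

Ltac zinlist x l :=
  lazymatch l with
  | nil => constr:(false)
  | cons x _ => constr:(true)
  | cons _ ?l' => zinlist x l'
  end.

Ltac zidx x l :=
  lazymatch l with
  | cons x _ => constr:(O)
  | cons _ ?l' => let n := zidx x l' in constr:(S n)
  end.

Ltac zatoms t l :=
  lazymatch t with
  | @Algebra.add _ ?a ?b => let l1 := zatoms a l in zatoms b l1
  | @Algebra.opp _ ?a => zatoms a l
  | @Algebra.zero _ => l
  | @intmul _ ?a _ => zatoms a l
  | _ => let b := zinlist t l in
         lazymatch b with
         | true => l
         | false => constr:(cons t l)
         end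
  end.

Ltac zreify t l :=
  lazymatch t with
  | @Algebra.add _ ?a ?b =>
      let ra := zreify a l in let rb := zreify b l in constr:(ZP ra rb)
  | @Algebra.opp _ ?a => let ra := zreify a l in constr:(ZN ra)
  | @Algebra.zero _ => constr:(Z0)
  | @intmul _ ?a ?k => let ra := zreify a l in constr:(ZI ra k)
  | _ => let n := zidx t l in constr:(ZA n)
  end.

Ltac zmod :=
  lazymatch goal with
  | |- @eq ?T ?L ?R =>
      let l0 := constr:(@nil T) in
      let l1 := zatoms L l0 in
      let l := zatoms R l1 in
      let rl := zreify L l in
      let rr := zreify R l in
      change (@zeval _ l rl = @zeval _ l rr);
      apply: zcheck; vm_compute; reflexivity
  end.


Lemma lin1 {V : zmodType} (k1 : int) {A1 B1 L R : V} :
  A1 = B1 -> L - R = (A1 - B1) *~ k1 -> L = R.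
Proof. by move=> ->; rewrite subrr mul0rz => /eqP; rewrite subr_eq0 => /eqP. Qed.
Lemma lin2 {V : zmodType} (k1 k2 : int) {A1 B1 A2 B2 L R : V} :
  A1 = B1 -> A2 = B2 -> L - R = (A1 - B1) *~ k1 + (A2 - B2) *~ k2 -> L = R.
Proof.
by move=> -> ->; rewrite !subrr !mul0rz addr0 => /eqP; rewrite subr_eq0 => /eqP.
Qed.
Lemma lin3 {V : zmodType} (k1 k2 k3 : int) {A1 B1 A2 B2 A3 B3 L R : V} :
  A1 = B1 -> A2 = B2 -> A3 = B3 ->
  L - R = (A1 - B1) *~ k1 + (A2 - B2) *~ k2 + (A3 - B3) *~ k3 -> L = R.
Proof.
by move=> -> -> ->; rewrite !subrr !mul0rz !addr0 => /eqP; rewrite subr_eq0 => /eqP.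
Qed.

Section Alg.
Variables (R : zmodType) (mul : R -> R -> R).
Hypothesis Hr : nonassoc_ring mul.
Hypothesis Ha : alternative mul.
Variable e : R.
Hypothesis Hee : mul e e = e.

Lemma mDl x y z : mul (x + y) z = mul x z + mul y z. Proof. exact: Hr.1. Qed.
Lemma mDr x y z : mul x (y + z) = mul x y + mul x z. Proof. exact: Hr.2. Qed.
Lemma m0l z : mul 0 z = 0.
Proof. have h := mDl 0 0 z; rewrite addr0 in h. by apply: (addrI (mul 0 z)); rewrite addr0 -h. Qed.
Lemma m0r z : mul z 0 = 0.
Proof. have h := mDr z 0 0; rewrite addr0 in h. by apply: (addrI (mul z 0)); rewrite addr0 -h. Qed.
Lemma mNl x z : mul (- x) z = - mul x z.
Proof. by apply/eqP; rewrite -addr_eq0 -mDl addNr m0l. Qed.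
Lemma mNr x z : mul z (- x) = - mul z x.
Proof. by apply/eqP; rewrite -addr_eq0 -mDr addNr m0r. Qed.

Ltac mexp := repeat progress rewrite ?mDl ?mDr ?mNl ?mNr ?m0l ?m0r.
Ltac solve_lin := rewrite /assoc /commr; mexp; zmod.

Lemma A_L a b c : assoc mul a b c + assoc mul b a c = 0.
Proof.
apply: (lin3 1 (-1) (-1) (Ha (a + b) c).1 (Ha a c).1 (Ha b c).1); solve_lin.
Qed.
Lemma A_R a b c : assoc mul a b c + assoc mul a c b = 0.
Proof.
apply: (lin3 1 (-1) (-1) (Ha (b + c) a).2 (Ha b a).2 (Ha c a).2); solve_lin.
Qed.
Lemma flex a b : assoc mul a b a = 0.
Proof. apply: (lin2 1 (-1) (A_R a a b) (Ha a b).1); solve_lin. Qed.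

Lemma E1 x : mul e (mul e x) = mul e x.
Proof. by apply: (lin1 (-1) (Ha e x).1); rewrite /assoc Hee; zmod. Qed.
Lemma E2 x : mul (mul x e) e = mul x e.
Proof. by apply: (lin1 1 (Ha e x).2); rewrite /assoc Hee; zmod. Qed.
Lemma E3 x : mul e (mul x e) = mul (mul e x) e.
Proof. by apply: (lin1 (-1) (flex e x)); rewrite /assoc; zmod. Qed.

Ltac esimp := repeat progress rewrite ?Hee ?E1 ?E2 ?E3.

Definition isP (i j : bool) (x : R) :=
  mul e x = (if i then x else 0) /\ mul x e = (if j then x else 0).

Lemma peirce_isP i j x : peirce mul e i j x -> isP i j x.
Proof.
case=> a ->; rewrite /isP /rmul_e /lmul_e.
case: i; case: j => /=; split; mexp; esimp; mexp; esimp; zmod.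
Qed.

Lemma isP_peirce i j x : isP i j x -> peirce mul e i j x.
Proof.
case=> h1 h2; exists x; move: h1 h2; rewrite /rmul_e /lmul_e.
case: i; case: j => /= h1 h2; mexp; rewrite ?h1 ?h2; mexp; rewrite ?h1 ?h2; zmod.
Qed.

Lemma isPD i j x y : isP i j x -> isP i j y -> isP i j (x + y).
Proof. by rewrite /isP !mDl !mDr => -[-> ->] [-> ->]; case: i; case: j; rewrite ?addr0. Qed.
Lemma isPN i j x : isP i j x -> isP i j (- x).
Proof. by rewrite /isP mNl mNr => -[-> ->]; case: i; case: j; rewrite ?oppr0. Qed.

Definition c11 x := mul (mul e x) e.
Definition c12 x := mul e x - mul (mul e x) e.
Definition c21 x := mul x e - mul (mul e x) e.
Definition c22 x := x - mul e x - mul x e + mul (mul e x) e.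

Lemma isP11 x : isP true true (c11 x).
Proof. by apply: peirce_isP; exists x. Qed.
Lemma isP12 x : isP true false (c12 x).
Proof. by apply: peirce_isP; exists x. Qed.
Lemma isP21 x : isP false true (c21 x).
Proof. apply: peirce_isP; exists x; rewrite /rmul_e /lmul_e /c21; mexp; zmod. Qed.
Lemma isP22 x : isP false false (c22 x).
Proof. apply: peirce_isP; exists x; rewrite /rmul_e /lmul_e /c22; mexp; zmod. Qed.

Lemma piE x : commr mul (commr mul x e) e = c12 x + c21 x.
Proof. rewrite /commr /c12 /c21; mexp; esimp; zmod. Qed.

Lemma diagP t : commr mul (commr mul t e) e = 0 -> t = c11 t + c22 t.
Proof. rewrite piE => h; apply: (lin1 1 h); rewrite /c11 /c12 /c21 /c22; zmod. Qed.


Lemma EP1 x y : mul e (mul x y) = mul (mul e x) y + mul (mul x e) y - mul x (mul e y).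
Proof. apply: (lin1 (-1) (A_L e x y)); solve_lin. Qed.
Lemma EP2 x y : mul (mul x y) e = mul x (mul y e) - mul (mul x e) y + mul x (mul e y).
Proof. apply: (lin1 1 (A_R x e y)); solve_lin. Qed.
Lemma EP3 x y : mul (mul x e) y - mul x (mul e y) + (mul (mul y e) x - mul y (mul e x)) = 0.
Proof. apply: (lin3 1 (-1) 1 (A_L x e y) (A_R e x y) (A_L e y x)); solve_lin. Qed.

Ltac lin1t h := first [ apply: (lin1 1 h); solve_lin | apply: (lin1 (-1) h); solve_lin ].

Ltac pfnd' a b c d := split => /=; rewrite ?EP1 ?EP2; mexp;
  repeat progress (rewrite ?a ?b ?c ?d; mexp); zmod.
Ltac pfd' x y a b c d := let hh := fresh "hh" in move: (EP3 x y); rewrite ?a ?b ?c ?d => hh; lin1t hh.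

Lemma PF_12_21 x y : isP true false x -> isP false true y ->
  isP true true (mul x y) /\ isP false false (mul y x).
Proof. case=> /= Hx1 Hx2 [/= Hy1 Hy2]; split; pfnd' Hx1 Hx2 Hy1 Hy2. Qed.
Lemma PF_12_12 x y : isP true false x -> isP true false y -> isP false true (mul x y).
Proof. case=> /= Hx1 Hx2 [/= Hy1 Hy2]; pfnd' Hx1 Hx2 Hy1 Hy2. Qed.
Lemma PF_21_21 x y : isP false true x -> isP false true y -> isP true false (mul x y).
Proof. case=> /= Hx1 Hx2 [/= Hy1 Hy2]; pfnd' Hx1 Hx2 Hy1 Hy2. Qed.
Lemma PF_11_21 x y : isP true true x -> isP false true y ->
  mul x y = 0 /\ isP false true (mul y x).
Proof. case=> /= Hx1 Hx2 [/= Hy1 Hy2]; split; [pfd' x y Hx1 Hx2 Hy1 Hy2 | pfnd' Hx1 Hx2 Hy1 Hy2]. Qed.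
Lemma PF_22_21 x y : isP false false x -> isP false true y ->
  mul y x = 0 /\ isP false true (mul x y).
Proof. case=> /= Hx1 Hx2 [/= Hy1 Hy2]; split; [pfd' y x Hx1 Hx2 Hy1 Hy2 | pfnd' Hx1 Hx2 Hy1 Hy2]. Qed.
Lemma PF_11_12 x y : isP true true x -> isP true false y ->
  mul y x = 0 /\ isP true false (mul x y).
Proof. case=> /= Hx1 Hx2 [/= Hy1 Hy2]; split; [pfd' y x Hx1 Hx2 Hy1 Hy2 | pfnd' Hx1 Hx2 Hy1 Hy2]. Qed.
Lemma PF_22_12 x y : isP false false x -> isP true false y ->
  mul x y = 0 /\ isP true false (mul y x).
Proof. case=> /= Hx1 Hx2 [/= Hy1 Hy2]; split; [pfd' x y Hx1 Hx2 Hy1 Hy2 | pfnd' Hx1 Hx2 Hy1 Hy2]. Qed.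

Local Notation cm := (commr mul).

Lemma cmDl x y z : cm (x + y) z = cm x z + cm y z. Proof. solve_lin. Qed.
Lemma cmDr x y z : cm z (x + y) = cm z x + cm z y. Proof. solve_lin. Qed.
Lemma cmNl x z : cm (- x) z = - cm x z. Proof. solve_lin. Qed.
Lemma cmNr x z : cm z (- x) = - cm z x. Proof. solve_lin. Qed.
Lemma cm0l x : cm 0 x = 0. Proof. solve_lin. Qed.
Lemma cm0r x : cm x 0 = 0. Proof. solve_lin. Qed.
Lemma cmC x y : cm x y = - cm y x. Proof. solve_lin. Qed.
Lemma ceE : cm e e = 0. Proof. solve_lin. Qed.

Lemma V12 a : isP true false a ->
  [/\ cm e a = a, cm a e = - a, cm (cm a e) e = a & cm (cm e a) e = - a].
Proof. case=> /= h1 h2; split; rewrite /commr; mexp; rewrite ?h1 ?h2; mexp; rewrite ?h1 ?h2; mexp; zmod. Qed.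
Lemma V21 a : isP false true a ->
  [/\ cm e a = - a, cm a e = a, cm (cm a e) e = a & cm (cm e a) e = - a].
Proof. case=> /= h1 h2; split; rewrite /commr; mexp; rewrite ?h1 ?h2; mexp; rewrite ?h1 ?h2; mexp; zmod. Qed.

Lemma comm_12_21 a y : isP true false a -> isP false true y -> cm (cm a y) e = 0.
Proof.
move=> ha hy; have [[/= f1 f2] [/= f3 f4]] := PF_12_21 _ _ ha hy.
rewrite /commr; mexp; rewrite f1 f2 f3 f4; zmod.
Qed.
Lemma comm_21_12 a y : isP false true a -> isP true false y -> cm (cm a y) e = 0.
Proof. by move=> ha hy; rewrite (cmC a y) cmNl comm_12_21 // oppr0. Qed.

Lemma diag21 t u y : isP true true t -> isP false false u -> isP false true y ->
  cm (cm (t + u) y) e = cm (t + u) y.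
Proof.
move=> ht hu hy.
have [f1 [/= f2 f3]] := PF_11_21 _ _ ht hy.
have [f4 [/= f5 f6]] := PF_22_21 _ _ hu hy.
rewrite /commr; mexp; rewrite f1 f4; mexp; rewrite f2 f3 f5 f6; zmod.
Qed.
Lemma diag12 t u x : isP true true t -> isP false false u -> isP true false x ->
  cm (cm (t + u) x) e = - cm (t + u) x.
Proof.
move=> ht hu hx.
have [f1 [/= f2 f3]] := PF_11_12 _ _ ht hx.
have [f4 [/= f5 f6]] := PF_22_12 _ _ hu hx.
rewrite /commr; mexp; rewrite f1 f4; mexp; rewrite f2 f3 f5 f6; zmod.
Qed.
Lemma diag_x12 t u x : isP true true t -> isP false false u -> isP true false x ->
  cm (cm (cm x (t + u)) e) e = cm x (t + u).
Proof.
move=> ht hu hx.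
by rewrite (cmC x (t + u)) cmNl (diag12 _ _ _ ht hu hx) opprK (diag12 _ _ _ ht hu hx).
Qed.


Variable D : R -> R.
Hypothesis HD : lie3_derivation mul D.
Hypothesis Hi : forall t u, isP true true t -> isP false false u ->
  (forall x, isP true false x -> cm (t + u) x = 0) -> central mul (t + u).
Hypothesis Hii : forall t u, isP true true t -> isP false false u ->
  (forall x, isP false true x -> cm (t + u) x = 0) -> central mul (t + u).

Definition T a b := D (a + b) - D a - D b.

Ltac cexp := repeat progress rewrite ?cmDl ?cmDr ?cmNl ?cmNr ?cm0l ?cm0r.

Lemma D0 : D 0 = 0.
Proof. have := HD 0 0 0; repeat rewrite ?cm0l ?cm0r; by rewrite !addr0. Qed.

Lemma P1 a b y w : cm (cm (T a b) y) w = T (cm (cm a y) w) (cm (cm b y) w).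
Proof.
have E : cm (cm a y) w + cm (cm b y) w = cm (cm (a + b) y) w by rewrite !cmDl.
rewrite /T E !HD /commr; mexp; zmod.
Qed.
Lemma P2 a b y w : cm (cm y (T a b)) w = T (cm (cm y a) w) (cm (cm y b) w).
Proof.
have E : cm (cm y a) w + cm (cm y b) w = cm (cm y (a + b)) w by rewrite cmDr cmDl.
rewrite /T E !HD /commr; mexp; zmod.
Qed.
Lemma P3 a b y w : cm (cm y w) (T a b) = T (cm (cm y w) a) (cm (cm y w) b).
Proof.
have E : cm (cm y w) a + cm (cm y w) b = cm (cm y w) (a + b) by rewrite cmDr.
rewrite /T E !HD /commr; mexp; zmod.
Qed.

Lemma cz1 z (hz : central mul z) y w : cm (cm z y) w = 0.
Proof. by rewrite hz cm0l. Qed.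
Lemma cz2 z (hz : central mul z) y w : cm (cm y z) w = 0.
Proof. by rewrite (cmC y z) hz oppr0 cm0l. Qed.

Lemma Split2 p1 p2 q1 q2 w : central mul (T p1 p2) -> central mul (T q1 q2) ->
  D (cm (cm (p1 + p2) (q1 + q2)) w) =
  D (cm (cm p1 q1) w) + D (cm (cm p1 q2) w) + D (cm (cm p2 q1) w) + D (cm (cm p2 q2) w).
Proof.
move=> h1 h2; rewrite !HD.
have Ep : D (p1 + p2) = T p1 p2 + D p1 + D p2 by rewrite /T; zmod.
have Eq : D (q1 + q2) = T q1 q2 + D q1 + D q2 by rewrite /T; zmod.
rewrite Ep Eq; move: (T p1 p2) (T q1 q2) h1 h2 => z1 z2 h1 h2.
have c1 : forall x, mul z1 x = mul x z1.
  by move=> x; apply/eqP; rewrite -subr_eq0; apply/eqP; exact: h1.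
have c2 : forall x, mul x z2 = mul z2 x.
  by move=> x; apply/esym/eqP; rewrite -subr_eq0; apply/eqP; exact: h2.
rewrite /commr; mexp; rewrite !c1 !c2; zmod.
Qed.

Lemma B1 a : isP true false a -> central mul (T e a).
Proof.
move=> ha.
have pt : cm (cm (T e a) e) e = 0.
  have [_ _ v3 _] := V12 _ ha.
  by rewrite P1 ceE cm0l v3 /T add0r D0 subr0 subrr.
have Et := diagP _ pt.
rewrite Et; apply: Hii; [exact: isP11 | exact: isP22 |] => y hy.
rewrite -(diag21 _ _ _ (isP11 (T e a)) (isP22 (T e a)) hy) -Et.
have [_ _ _ v4] := V21 _ hy.
by rewrite P1 v4 (comm_12_21 _ _ ha hy) /T addr0 subrr D0 subr0.
Qed.

Lemma B2 b : isP false true b -> central mul (T e b).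
Proof.
move=> hb.
have pt : cm (cm (T e b) e) e = 0.
  have [_ _ v3 _] := V21 _ hb.
  by rewrite P1 ceE cm0l v3 /T add0r D0 subr0 subrr.
have Et := diagP _ pt.
rewrite Et; apply: Hi; [exact: isP11 | exact: isP22 |] => x hx.
apply: oppr_inj; rewrite oppr0.
rewrite -(diag12 _ _ _ (isP11 (T e b)) (isP22 (T e b)) hx) -Et.
have [_ _ _ v4] := V12 _ hx.
by rewrite P1 v4 (comm_21_12 _ _ hb hx) /T addr0 subrr D0 subr0.
Qed.

Lemma Tz a b : T a b = 0 -> D (a + b) = D a + D b.
Proof. move=> h; apply: (lin1 1 h); rewrite /T; zmod. Qed.

Ltac cexp2 := repeat progress rewrite ?cmDl ?cmDr.

Lemma C1 a b : isP true false a -> isP false true b -> T a b = 0.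
Proof.
move=> ha hb.
have E : cm (cm (e + a) (e + - b)) e = a + b.
  have [[/= f1 f2] [/= f3 f4]] := PF_12_21 _ _ ha hb.
  case: (ha) => /= a1 a2; case: (hb) => /= b1 b2.
  rewrite /commr; mexp; repeat progress (rewrite ?Hee ?a1 ?a2 ?b1 ?b2 ?f1 ?f2 ?f3 ?f4; mexp); zmod.
move: (Split2 e a e (- b) e (B1 _ ha) (B2 _ (isPN _ _ _ hb))).
have [_ _ _ v4] := V21 _ (isPN _ _ _ hb). have [_ _ v3 _] := V12 _ ha.
have c0 := comm_12_21 _ _ ha (isPN _ _ _ hb).
rewrite E ceE cm0l v4 v3 c0 D0 opprK => h.
apply: (lin1 1 h); rewrite /T; zmod.
Qed.

Lemma C2 a b : isP true false a -> isP true false b -> T a b = 0.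
Proof.
move=> ha hb.
have hc : isP false true (cm a (- b)).
  rewrite /commr; apply: isPD; [|apply: isPN]; apply: PF_12_12 => //; exact: isPN.
have [_ _ _ v4] := V12 _ (isPN _ _ _ hb). have [_ _ v3 _] := V12 _ ha.
have [_ v2 _ _] := V21 _ hc.
have E : cm (cm (e + a) (e + - b)) e = (a + b) + cm a (- b).
  have [/= f1 f2] := PF_12_12 _ _ ha hb. have [/= f3 f4] := PF_12_12 _ _ hb ha.
  case: (ha) => /= a1 a2; case: (hb) => /= b1 b2.
  rewrite /commr; mexp; repeat progress (rewrite ?Hee ?a1 ?a2 ?b1 ?b2 ?f1 ?f2 ?f3 ?f4; mexp); zmod.
move: (Split2 e a e (- b) e (B1 _ ha) (B1 _ (isPN _ _ _ hb))).
rewrite E ceE cm0l v4 v3 v2 D0 opprK (Tz _ _ (C1 _ _ (isPD _ _ _ _ ha hb) hc)) => h.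
apply: (lin1 1 h); rewrite /T; zmod.
Qed.

Lemma C3 a b : isP false true a -> isP false true b -> T a b = 0.
Proof.
move=> ha hb.
have hc : isP true false (cm a (- b)).
  rewrite /commr; apply: isPD; [|apply: isPN]; apply: PF_21_21 => //; exact: isPN.
have [_ _ _ v4] := V21 _ (isPN _ _ _ hb). have [_ _ v3 _] := V21 _ ha.
have [_ v2 _ _] := V12 _ hc.
have E : cm (cm (e + a) (e + - b)) e = - cm a (- b) + (a + b).
  have [/= f1 f2] := PF_21_21 _ _ ha hb. have [/= f3 f4] := PF_21_21 _ _ hb ha.
  case: (ha) => /= a1 a2; case: (hb) => /= b1 b2.
  rewrite /commr; mexp; repeat progress (rewrite ?Hee ?a1 ?a2 ?b1 ?b2 ?f1 ?f2 ?f3 ?f4; mexp); zmod.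
move: (Split2 e a e (- b) e (B2 _ ha) (B2 _ (isPN _ _ _ hb))).
rewrite E ceE cm0l v4 v3 v2 D0 opprK (Tz _ _ (C1 _ _ (isPN _ _ _ hc) (isPD _ _ _ _ ha hb))) => h.
apply: (lin1 1 h); rewrite /T; zmod.
Qed.

Lemma C a b c d : isP true false a -> isP false true b ->
  isP true false c -> isP false true d -> T (a + b) (c + d) = 0.
Proof.
move=> ha hb hc hd; rewrite /T.
have -> : a + b + (c + d) = (a + c) + (b + d) by zmod.
rewrite (Tz _ _ (C1 _ _ (isPD _ _ _ _ ha hc) (isPD _ _ _ _ hb hd))) (Tz _ _ (C2 _ _ ha hc)) (Tz _ _ (C3 _ _ hb hd)).
rewrite (Tz _ _ (C1 _ _ ha hb)) (Tz _ _ (C1 _ _ hc hd)); zmod.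
Qed.

Lemma Tpi a b : cm (cm (T a b) e) e = 0.
Proof. rewrite P1 !piE; apply: C; solve [apply: isP12 | apply: isP21]. Qed.

Lemma Main a b : central mul (T a b).
Proof.
have Et := diagP _ (Tpi a b).
rewrite Et; apply: Hi; [exact: isP11 | exact: isP22 |] => x hx.
have h := P3 a b e x.
have [v1 _ _ _] := V12 _ hx.
rewrite v1 in h.
have hu := Tpi (cm x a) (cm x b).
rewrite -h Et (diag_x12 _ _ _ (isP11 (T a b)) (isP22 (T a b)) hx) in hu.
by rewrite cmC hu oppr0.
Qed.

End Alg.

Theorem corollary2p7 (R : zmodType) (mul : R -> R -> R) (e : R) :
  nonassoc_ring mul ->
  alternative mul ->
  nontrivial_idempotent mul e ->
  (forall a11 a22, peirce mul e true true a11 -> peirce mul e false false a22 ->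
     (forall x, peirce mul e true false x -> commr mul (a11 + a22) x = 0) ->
     central mul (a11 + a22)) ->
  (forall a11 a22, peirce mul e true true a11 -> peirce mul e false false a22 ->
     (forall x, peirce mul e false true x -> commr mul (a11 + a22) x = 0) ->
     central mul (a11 + a22)) ->
  forall D : R -> R, lie3_derivation mul D ->
  forall a b, central mul (D (a + b) - D a - D b).
Proof.
move=> Hr Ha [_ [Hee _]] Hi Hii D HD a b.
apply: (@Main R mul Hr Ha e Hee D HD).
- move=> t u ht hu hx.
  apply: Hi; [exact: (@isP_peirce R mul Hr e _ _ _ ht) | exact: (@isP_peirce R mul Hr e _ _ _ hu) |].
  by move=> x /(@peirce_isP R mul Hr Ha e Hee _ _ _) /hx.
- move=> t u ht hu hx.
  apply: Hii; [exact: (@isP_peirce R mul Hr e _ _ _ ht) | exact: (@isP_peirce R mul Hr e _ _ _ hu) |].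
  by move=> x /(@peirce_isP R mul Hr Ha e Hee _ _ _) /hx.
Qed.
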